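(* Let $f:\{0,1\}^n\to\{0,1\}$ be symmetric and suppose there is $a\in\{0,1\}^n$ with $1\le|a|\le n-1$ such that $f(x)=f(x+a)$ for all $x\in\{0,1\}^n$. If $|a|$ is odd, then $f$ is constant. If $|a|$ is even, then $f$ is constant, PARITY, or the negation of PARITY.
   Context: $f$ is symmetric if $f(x)$ depends only on the Hamming weight $|x|$. Addition of bit strings is bitwise mod 2. $\mathrm{PARITY}(x)=1$ iff $|x|$ is odd. *)

(* Defs.v *)
From mathcomp Require Import all_boot.
Set Implicit Arguments. Unset Strict Implicit. Unset Printing Implicit Defensive.

Definition hweight (n : nat) (x : n.-tuple bool) : nat := count id x.

Definition bxor (n : nat) (x y : n.-tuple bool) : n.-tuple bool :=
  [tuple of map (fun p => addb p.1 p.2) (zip x y)].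

Definition symmetric_fun (n : nat) (f : n.-tuple bool -> bool) : Prop :=
  forall x y : n.-tuple bool, hweight x = hweight y -> f x = f y.

Definition parity (n : nat) (x : n.-tuple bool) : bool := odd (hweight x).

(* Main.v *)
Require Import Defs.
From mathcomp Require Import all_boot.
From mathcomp Require Import zify.

Fixpoint build (a : seq bool) (p q : nat) : seq bool :=
  match a with
  | [::] => [::]
  | true :: a' => (0 < p) :: build a' p.-1 q
  | false :: a' => (0 < q) :: build a' p q.-1
  end.

Lemma size_build a p q : size (build a p q) = size a.
Proof. by elim: a p q => [|[] a IH] p q //=; rewrite IH. Qed.

Lemma count_build a p q :
  count id (build a p q) = minn p (count id a) + minn q (count negb a).
Proof.
elim: a p q => [|[] a IH] p q /=; first by rewrite !minn0.
- rewrite IH; case: p => [|p] /=; lia.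
- rewrite IH; case: q => [|q] /=; lia.
Qed.

Lemma count_build_xor a p q :
  count id (map (fun p => addb p.1 p.2) (zip (build a p q) a)) =
  (count id a - minn p (count id a)) + minn q (count negb a).
Proof.
elim: a p q => [|[] a IH] p q /=; first by rewrite !minn0.
- rewrite IH; case: p => [|p] /=; lia.
- rewrite IH; case: q => [|q] /=; rewrite ?addbF; lia.
Qed.

Lemma count_negb_size (s : seq bool) : count negb s = size s - count id s.
Proof. elim: s => [|[] s IH] //=; rewrite IH; have := count_size id s; lia. Qed.

Theorem lemma7p8 (n : nat) (f : n.-tuple bool -> bool) (a : n.-tuple bool) :
  symmetric_fun f ->
  1 <= hweight a <= n - 1 ->
  (forall x : n.-tuple bool, f x = f (bxor x a)) ->
  (odd (hweight a) -> exists c : bool, forall x, f x = c) /\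
  (~~ odd (hweight a) ->
     (exists c : bool, forall x, f x = c) \/
     (forall x, f x = parity x) \/
     (forall x, f x = ~~ parity x)).
Proof.
move=> Hsym Hw Hxor.
set w := hweight a in Hw *.
case/andP: Hw => Hw1 Hw2.
have Hneg : count negb a = n - w by rewrite count_negb_size size_tuple.
have Hsz : forall p q, size (build a p q) == n.
  by move=> p q; rewrite size_build size_tuple.
have HW : forall p q, hweight (Tuple (Hsz p q)) = minn p w + minn q (n - w).
  by move=> p q; rewrite /hweight /= count_build Hneg.
have HX : forall p q, hweight (bxor (Tuple (Hsz p q)) a) = (w - minn p w) + minn q (n - w).
  by move=> p q; rewrite /hweight /bxor /= count_build_xor Hneg.
have step : forall m x y, m + 2 <= n -> hweight x = m -> hweight y = m + 2 -> f x = f y.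
  move=> m x y Hm Hx Hy.
  have [p [q [Hp [Hp2 [Hq Hpq]]]]] : exists p q, (1 <= p) /\ (p <= w) /\ q + 1 <= n - w /\ w - p + q = m.
    case: (leqP (w - 1) m) => H.
    - exists 1, (m + 1 - w); split; [|split; [|split]]; lia.
    - exists (w - m), 0; split; [|split; [|split]]; lia.
  have E1 : f x = f (Tuple (Hsz p q)).
    rewrite (Hxor (Tuple (Hsz p q))); apply: Hsym; rewrite HX; lia.
  have E2 : f (Tuple (Hsz p q)) = f (Tuple (Hsz p.-1 q.+1)).
    apply: Hsym; rewrite !HW; lia.
  have E3 : f (Tuple (Hsz p.-1 q.+1)) = f y.
    rewrite (Hxor (Tuple (Hsz p.-1 q.+1))); apply: Hsym; rewrite HX; lia.
  by rewrite E1 E2 E3.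
pose mk k := Tuple (Hsz (minn k w) (k - minn k w)).
have Hmk : forall k, k <= n -> hweight (mk k) = k.
  by move=> k Hk; rewrite /mk HW; lia.
have Hpar : forall k, k <= n -> f (mk k) = f (mk (odd k)).
  move=> k; elim: k {-2}k (leqnn k) => [|K IH] k Hk Hkn.
    by have -> : k = 0 by lia.
  case: k Hk Hkn => [|[|k]] Hk Hkn //.
  have -> : odd k.+2 = odd k by rewrite /= negbK.
  rewrite -(IH k); [|lia|lia].
  symmetry; apply: (step k); rewrite ?Hmk; lia.
have Hf : forall x, f x = f (mk (odd (hweight x))).
  move=> x; have Hx : hweight x <= n by have := count_size id x; rewrite size_tuple.
  rewrite -Hpar //; apply: Hsym; rewrite Hmk //.
have Hn1 : 1 <= n by lia.
split.
- move=> Hodd; exists (f (mk 0)) => x; rewrite Hf.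
  case: (odd (hweight x)) => //=.
  have Ew : f (mk w) = f (mk 1) by rewrite Hpar ?Hodd //; lia.
  rewrite (Hxor (mk 0)) -Ew.
  apply: Hsym.
  rewrite /mk HX HW; lia.
- move=> _.
  case E0: (f (mk 0)); case E1: (f (mk 1)).
  + left; exists true => x; rewrite Hf; by case: odd.
  + right; right => x; rewrite Hf /parity; by case: odd.
  + right; left => x; rewrite Hf /parity; by case: odd.
  + left; exists false => x; rewrite Hf; by case: odd.
Qed.
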